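(* Let $M\in\mathcal{I}$. Then $2\in M$ or $M$ is unbounded.
   Context: For a summable sequence $\mathbf{x}=(x_n)$ of positive reals, $\mathcal{A}(\mathbf{x})=\{\sum_{n\in A}x_n: A\subseteq\mathbb{N}\}$ is its achievement set and its cardinal function $f$ assigns to $x\in\mathcal{A}(\mathbf{x})$ the cardinality (a positive integer, $\omega$, or $\mathfrak{c}$) of $\{(\varepsilon_n)\in\{0,1\}^{\mathbb{N}}:\sum\varepsilon_nx_n=x\}$. $\mathcal{I}$ is the family of ranges of cardinal functions of such sequences whose achievement set is a finite union of (nondegenerate) closed intervals. A set $M\subseteq\{1,2,\dots\}\cup\{\omega,\mathfrak{c}\}$ is bounded if there is $N\in\mathbb{N}$ with $M\subseteq\{1,\dots,N\}$; otherwise it is unbounded. *)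

(* Defs.v *)
From Stdlib Require Import Reals List.
From Coquelicot Require Import Coquelicot.
Open Scope R_scope.

Definition subsum_is (x : nat -> R) (eps : nat -> bool) (y : R) : Prop :=
  is_series (fun n => if eps n then x n else 0) y.

Definition achievement_set (x : nat -> R) (y : R) : Prop :=
  exists eps : nat -> bool, subsum_is x eps y.

Definition reps (x : nat -> R) (y : R) (eps : nat -> bool) : Prop :=
  subsum_is x eps y.

Inductive CardVal : Type :=
  | CFin : nat -> CardVal
  | COmega : CardVal
  | CContinuum : CardVal.

Definition has_card (S : (nat -> bool) -> Prop) (k : CardVal) : Prop :=
  match k with
  | CFin n => exists l : list (nat -> bool),
      NoDup l /\ length l = n /\ (forall e, S e <-> In e l)
  | COmega => exists f : nat -> (nat -> bool),
      (forall i j, f i = f j -> i = j) /\ (forall e, S e <-> exists i, f i = e)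
  | CContinuum => exists g : (nat -> bool) -> (nat -> bool),
      (forall c d, g c = g d -> c = d) /\ (forall e, S e <-> exists c, g c = e)
  end.

Definition card_range (x : nat -> R) (k : CardVal) : Prop :=
  exists y, achievement_set x y /\ has_card (reps x y) k.

Definition finite_union_of_intervals (A : R -> Prop) : Prop :=
  exists l : list (R * R),
    (forall p, In p l -> fst p < snd p) /\
    (forall y, A y <-> exists p, In p l /\ fst p <= y <= snd p).

Definition pos_summable (x : nat -> R) : Prop :=
  (forall n, 0 < x n) /\ ex_series x.

Definition in_I (M : CardVal -> Prop) : Prop :=
  exists x, pos_summable x /\ finite_union_of_intervals (achievement_set x) /\
            (forall k, M k <-> card_range x k).

Definition bounded_cards (M : CardVal -> Prop) : Prop :=
  exists N : nat, forall k, M k -> exists n, k = CFin n /\ (1 <= n <= N)%nat.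

(* Main.v *)
Require Import Defs.
From Stdlib Require Import Reals List Lra Lia Classical ClassicalEpsilon FunctionalExtensionality Arith FinFun.
From Coquelicot Require Import Coquelicot.
Open Scope R_scope.

Fixpoint ps (a : nat -> R) (p : nat) : R :=
  match p with O => 0 | S q => ps a q + a q end.

Lemma Series_zero : Series (fun _ => 0) = 0.
Proof.
  rewrite (Series_ext _ (fun n => 0 * (fun _ => 1) n)).
  - rewrite Series_scal_l. ring.
  - intros; simpl; ring.
Qed.

Lemma ex_series_shift (a : nat -> R) p : ex_series a -> ex_series (fun k => a (p + k)%nat).
Proof. intros H. apply (ex_series_incr_n a p). exact H. Qed.

Lemma Series_split (a : nat -> R) p : ex_series a ->
  Series a = ps a p + Series (fun k => a (p + k)%nat).
Proof.
  intros H. induction p.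
  - simpl. rewrite Rplus_0_l. apply Series_ext. intros; reflexivity.
  - rewrite IHp. simpl.
    rewrite (Series_incr_1 (fun k => a (p + k)%nat)).
    + rewrite Nat.add_0_r. rewrite Rplus_assoc. f_equal. f_equal.
      apply Series_ext. intros n. f_equal. lia.
    + apply ex_series_shift; auto.
Qed.

Lemma Series_nonneg (a : nat -> R) : (forall n, 0 <= a n) -> ex_series a -> 0 <= Series a.
Proof.
  intros H1 H2. rewrite <- Series_zero. apply Series_le; auto.
  intros; split; [lra| auto].
Qed.

Lemma Series_mono (a b : nat -> R) : (forall n, 0 <= a n <= b n) -> ex_series a -> ex_series b ->
  Series a <= Series b.
Proof. intros H _ Hb. apply Series_le; auto. Qed.

Lemma ps_nonneg a p : (forall n, 0 <= a n) -> 0 <= ps a p.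
Proof. intros H; induction p; simpl; [lra| specialize (H p); lra]. Qed.

Lemma ps_le_Series (a : nat -> R) p : (forall n, 0 <= a n) -> ex_series a -> ps a p <= Series a.
Proof.
  intros H1 H2. rewrite (Series_split a p H2).
  assert (0 <= Series (fun k => a (p+k)%nat)).
  { apply Series_nonneg; auto. apply ex_series_shift; auto. }
  lra.
Qed.

Lemma ps_ext a b p : (forall n, (n < p)%nat -> a n = b n) -> ps a p = ps b p.
Proof.
  induction p; intros H; simpl; auto.
  rewrite IHp; [rewrite H; auto| intros; apply H; lia].
Qed.

Lemma ps_mono a p q : (forall n, 0 <= a n) -> (p <= q)%nat -> ps a p <= ps a q.
Proof.
  intros H Hpq. induction Hpq; [lra|]. simpl. specialize (H m). lra.
Qed.

Lemma ps_sum_f (a : nat -> R) n : ps a (S n) = sum_f_R0 a n.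
Proof. induction n; simpl in *; [ring| rewrite <- IHn; ring]. Qed.

Lemma ex_series_cmp (a b : nat -> R) : (forall n, 0 <= a n <= b n) -> ex_series b -> ex_series a.
Proof.
  intros H Hb. apply (ex_series_le a b); auto.
  intros n. change (norm (a n)) with (Rabs (a n)). destruct (H n). rewrite Rabs_right; lra.
Qed.

Definition drop (a : nat -> R) (j : nat) : nat -> R :=
  fun i => if Nat.eq_dec i j then 0 else a i.

Lemma Series_drop (a : nat -> R) j : ex_series a ->
  Series a = a j + Series (drop a j).
Proof.
  intros H.
  assert (Hb : ex_series (drop a j)).
  { apply (ex_series_incr_n _ (S j)).
    apply (ex_series_ext (fun k => a (S j + k)%nat)).
    - intros n. unfold drop. destruct (Nat.eq_dec (S j + n) j); [lia|reflexivity].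
    - apply ex_series_shift; auto. }
  rewrite (Series_split a (S j) H), (Series_split _ (S j) Hb).
  change (ps a (S j)) with (ps a j + a j).
  change (ps (drop a j) (S j)) with (ps (drop a j) j + drop a j j).
  unfold drop at 2. destruct (Nat.eq_dec j j) as [_|]; [|congruence].
  rewrite (ps_ext (drop a j) a j).
  - rewrite (Series_ext (fun k => drop a j (S j + k)%nat) (fun k => a (S j+k)%nat)).
    + ring.
    + intros n. unfold drop. destruct (Nat.eq_dec (S j + n) j); [lia|reflexivity].
  - intros n Hn. unfold drop. destruct (Nat.eq_dec n j); [lia|reflexivity].
Qed.

Fixpoint sumL (a : nat -> R) (l : list nat) : R :=
  match l with nil => 0 | j :: l' => a j + sumL a l' end.

Definition mask (l : list nat) (a : nat -> R) (i : nat) : R :=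
  if in_dec Nat.eq_dec i l then 0 else a i.

Lemma Series_mask (a : nat -> R) l : (forall n, 0 <= a n) -> ex_series a -> NoDup l ->
  Series a = sumL a l + Series (mask l a).
Proof.
  intros Hp He. induction l as [|j l IH]; intros Hnd.
  - simpl. rewrite Rplus_0_l. apply Series_ext. intros n. unfold mask. reflexivity.
  - inversion Hnd; subst. rewrite IH; auto.
    assert (Hm : ex_series (mask l a)).
    { apply (ex_series_cmp _ a); auto. intros n; unfold mask.
      destruct (in_dec _ _ _); specialize (Hp n); lra. }
    rewrite (Series_drop (mask l a) j Hm). simpl.
    unfold mask at 1. destruct (in_dec Nat.eq_dec j l); [contradiction|].
    rewrite (Series_ext _ (mask (j :: l) a)); [ring|].
    intros k. unfold mask, drop. destruct (Nat.eq_dec k j) as [E1|E1].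
    + subst. destruct (in_dec Nat.eq_dec j (j :: l)) as [|F]; [reflexivity| simpl in F; tauto].
    + destruct (in_dec Nat.eq_dec k l) as [G1|G1]; destruct (in_dec Nat.eq_dec k (j :: l)) as [G2|G2]; auto.
      * simpl in G2; tauto.
      * simpl in G2; destruct G2; [congruence|contradiction].
Qed.

Lemma sumL_le_Series (a : nat -> R) l : (forall n, 0 <= a n) -> ex_series a -> NoDup l ->
  sumL a l <= Series a.
Proof.
  intros Hp He Hnd. rewrite (Series_mask a l Hp He Hnd).
  assert (0 <= Series (mask l a)).
  { apply Series_nonneg. - intros n; unfold mask; destruct (in_dec _ _ _); [lra| auto].
    - apply (ex_series_cmp _ a); auto. intros n; unfold mask.
      destruct (in_dec _ _ _); specialize (Hp n); lra. }
  lra.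
Qed.

Lemma ex_series_bounded (b : nat -> R) B : (forall n, 0 <= b n) -> (forall N, ps b N <= B) ->
  ex_series b /\ Series b <= B.
Proof.
  intros Hp HB.
  destruct (growing_cv (fun n => sum_f_R0 b n)) as [l Hl].
  - intros n. simpl. specialize (Hp (S n)). lra.
  - exists B. intros y [n ->]. rewrite <- ps_sum_f. auto.
  - assert (Hs : is_series b l).
    { apply is_series_Reals. intros eps Heps. destruct (Hl eps Heps) as [N HN].
      exists N. intros n Hn. apply HN. lia. }
    split; [exists l; auto|].
    rewrite (is_series_unique b l Hs).
    destruct (Rle_dec l B) as [|Hn]; auto. exfalso.
    destruct (Hl (l - B)) as [N HN]; [lra|].
    specialize (HN N (Nat.le_refl N)). specialize (HB (S N)). rewrite ps_sum_f in HB.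
    unfold R_dist in HN. rewrite Rabs_left1 in HN; lra.
Qed.

Lemma sumL_map_seq (a : nat -> R) (s : nat -> nat) N :
  sumL a (map s (seq 0 N)) = ps (fun k => a (s k)) N.
Proof.
  induction N; [reflexivity|].
  rewrite seq_S, map_app.
  change (ps (fun k => a (s k)) (S N)) with (ps (fun k => a (s k)) N + a (s N)).
  rewrite <- IHN. simpl map.
  clear IHN. induction (map s (seq 0 N)) as [|h t IHt]; simpl; [lra| rewrite IHt; lra].
Qed.

Lemma rearrange_le (a : nat -> R) (s : nat -> nat) :
  (forall n, 0 <= a n) -> ex_series a -> (forall i j, s i = s j -> i = j) ->
  ex_series (fun k => a (s k)) /\ Series (fun k => a (s k)) <= Series a.
Proof.
  intros Hp He Hi. apply ex_series_bounded; auto.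
  intros N. rewrite <- sumL_map_seq. apply sumL_le_Series; auto.
  apply Injective_map_NoDup; [exact Hi| apply seq_NoDup].
Qed.

Lemma lim0_small (x : nat -> R) : is_lim_seq x 0 ->
  forall eps, 0 < eps -> exists K, forall i, (K <= i)%nat -> Rabs (x i) < eps.
Proof.
  intros H eps He. apply is_lim_seq_spec in H.
  destruct (H (mkposreal eps He)) as [K HK]. exists K. intros i Hi.
  specialize (HK i Hi). simpl in HK. rewrite Rminus_0_r in HK. exact HK.
Qed.

Section Sort.
Variable x : nat -> R.
Hypothesis xpos : forall n, 0 < x n.
Hypothesis xlim : is_lim_seq x 0.

Lemma finbound j : exists K, forall i, x j <= x i -> (i < K)%nat.
Proof.
  destruct (lim0_small x xlim (x j) (xpos j)) as [K HK]. exists K.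
  intros i Hi. destruct (Nat.lt_ge_cases i K) as [H|H]; [auto|]. exfalso.
  specialize (HK i H). rewrite Rabs_right in HK; [lra| apply Rle_ge, Rlt_le, xpos].
Qed.

Lemma argmax_below (l : list nat) K : (exists i, (i < K)%nat /\ ~ In i l) ->
  exists j, (j < K)%nat /\ ~ In j l /\ forall i, (i < K)%nat -> ~ In i l -> x i <= x j.
Proof.
  induction K as [|K IH]; intros [i0 [Hi0 Hn0]]; [lia|].
  destruct (classic (exists i, (i < K)%nat /\ ~ In i l)) as [Hex|Hno].
  - destruct (IH Hex) as [j [Hj1 [Hj2 Hj3]]].
    destruct (in_dec Nat.eq_dec K l) as [HK|HK].
    + exists j. repeat split; auto. intros i Hi Hil.
      destruct (Nat.eq_dec i K); [subst; contradiction|]. apply Hj3; auto; lia.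
    + destruct (Rle_dec (x K) (x j)).
      * exists j. repeat split; auto. intros i Hi Hil.
        destruct (Nat.eq_dec i K); [subst; auto|]. apply Hj3; auto; lia.
      * exists K. repeat split; auto. intros i Hi Hil.
        destruct (Nat.eq_dec i K); [subst; lra|]. specialize (Hj3 i ltac:(lia) Hil). lra.
  - assert (HK : ~ In K l).
    { intros HK. apply Hno. exists i0. split; auto.
      destruct (Nat.eq_dec i0 K); [subst; contradiction| lia]. }
    exists K. repeat split; auto. intros i Hi Hil.
    destruct (Nat.eq_dec i K); [subst; lra|]. exfalso. apply Hno. exists i; split; auto; lia.
Qed.

Lemma choose_exists (l : list nat) : exists j, ~ In j l /\ forall i, ~ In i l -> x i <= x j.
Proof.
  set (j0 := S (list_max l)).
  assert (Hj0 : ~ In j0 l).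
  { intros H. assert (list_max l <= list_max l)%nat as H1 by lia.
    apply list_max_le in H1. rewrite Forall_forall in H1. specialize (H1 _ H). unfold j0 in H1. lia. }
  destruct (finbound j0) as [K HK].
  assert (Hjk : (j0 < K)%nat) by (apply HK; lra).
  destruct (argmax_below l K) as [j [Hj1 [Hj2 Hj3]]]; [exists j0; auto|].
  exists j. split; auto. intros i Hi.
  destruct (Nat.lt_ge_cases i K) as [Hl|Hg]; [apply Hj3; auto|].
  specialize (Hj3 j0 Hjk Hj0).
  destruct (Rle_dec (x j0) (x i)) as [Hle|Hlt]; [specialize (HK i Hle); lia| lra].
Qed.

Definition sel (l : list nat) : nat := proj1_sig (constructive_indefinite_description _ (choose_exists l)).
Lemma sel_spec l : ~ In (sel l) l /\ forall i, ~ In i l -> x i <= x (sel l).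
Proof. unfold sel. destruct (constructive_indefinite_description _ _); simpl; auto. Qed.

Fixpoint hist (k : nat) : list nat :=
  match k with O => nil | S k => hist k ++ (sel (hist k) :: nil) end.
Definition sg (k : nat) : nat := sel (hist k).

Lemma hist_spec k j : In j (hist k) <-> exists i, (i < k)%nat /\ sg i = j.
Proof.
  induction k; simpl.
  - split; [tauto| intros [i [Hi _]]; lia].
  - rewrite in_app_iff, IHk. simpl. split.
    + intros [[i [Hi Hj]]|[Hj|[]]]; [exists i; split; auto; lia| exists k; split; auto].
    + intros [i [Hi Hj]]. destruct (Nat.eq_dec i k); [subst; right; left; reflexivity|].
      left. exists i; split; auto; lia.
Qed.

Lemma sg_inj i j : sg i = sg j -> i = j.
Proof.
  intros H. destruct (Nat.lt_total i j) as [Hl|[He|Hl]]; auto; exfalso.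
  - destruct (sel_spec (hist j)) as [Hn _]. apply Hn. apply hist_spec. exists i; auto.
  - destruct (sel_spec (hist i)) as [Hn _]. apply Hn. apply hist_spec. exists j; auto.
Qed.

Lemma sg_decr k : x (sg (S k)) <= x (sg k).
Proof.
  destruct (sel_spec (hist k)) as [_ H]. apply H.
  intros Hin. destruct (sel_spec (hist (S k))) as [Hn _]. apply Hn.
  simpl. apply in_or_app; left; auto.
Qed.

Lemma sg_surj n : exists k, sg k = n.
Proof.
  apply NNPP. intros Hno.
  destruct (finbound n) as [K HK].
  assert (Hb : forall k, (sg k < K)%nat).
  { intros k. apply HK. destruct (sel_spec (hist k)) as [_ H]. apply H.
    intros Hin. apply hist_spec in Hin. destruct Hin as [i [_ Hi]]. apply Hno; eauto. }
  assert (Hnd : NoDup (map sg (seq 0 (S K)))).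
  { apply Injective_map_NoDup; [intros a b; apply sg_inj| apply seq_NoDup]. }
  assert (Hinc : incl (map sg (seq 0 (S K))) (seq 0 K)).
  { intros y Hy. apply in_map_iff in Hy. destruct Hy as [k [<- _]]. apply in_seq. split; [lia| apply Hb]. }
  pose proof (NoDup_incl_length Hnd Hinc). rewrite length_map, !length_seq in H. lia.
Qed.

End Sort.

Definition te (x : nat -> R) (e : nat -> bool) (n : nat) : R := if e n then x n else 0.

Lemma rearr (a : nat -> R) (s t : nat -> nat) y : (forall n, 0 <= a n) ->
  (forall i j, s i = s j -> i = j) -> (forall i j, t i = t j -> i = j) ->
  (forall n, s (t n) = n) -> is_series a y -> is_series (fun k => a (s k)) y.
Proof.
  intros Hp Hs Ht Hst Ha.
  assert (He : ex_series a) by (exists y; auto).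
  destruct (rearrange_le a s Hp He Hs) as [He2 H1].
  destruct (rearrange_le (fun k => a (s k)) t (fun n => Hp (s n)) He2 Ht) as [_ H2].
  rewrite (Series_ext _ a) in H2 by (intros n; rewrite Hst; auto).
  rewrite (is_series_unique _ _ Ha) in H1, H2.
  replace y with (Series (fun k => a (s k))) by lra. apply Series_correct; auto.
Qed.

Lemma has_card_transfer (S S' : (nat -> bool) -> Prop) (Phi Psi : (nat -> bool) -> (nat -> bool)) k :
  (forall e, Psi (Phi e) = e) -> (forall f, Phi (Psi f) = f) ->
  (forall e, S e <-> S' (Phi e)) -> has_card S' k -> has_card S k.
Proof.
  intros H1 H2 H3. destruct k; simpl.
  - intros [l [Hnd [Hlen Hm]]]. exists (map Psi l). split; [|split].
    + apply Injective_map_NoDup; auto. intros a b Hab.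
      rewrite <- (H2 a), <- (H2 b), Hab; auto.
    + rewrite length_map; auto.
    + intros e. rewrite H3, Hm. split.
      * intros Hi. rewrite <- (H1 e). apply in_map; auto.
      * intros Hi. apply in_map_iff in Hi. destruct Hi as [f [<- Hf]]. rewrite H2; auto.
  - intros [f [Hi Hm]]. exists (fun i => Psi (f i)). split.
    + intros i j Hij. apply Hi. rewrite <- (H2 (f i)), <- (H2 (f j)), Hij; auto.
    + intros e. rewrite H3, Hm. split.
      * intros [i Hfi]. exists i. rewrite Hfi; auto.
      * intros [i Hfi]. exists i. rewrite <- Hfi; auto.
  - intros [f [Hi Hm]]. exists (fun i => Psi (f i)). split.
    + intros i j Hij. apply Hi. rewrite <- (H2 (f i)), <- (H2 (f j)), Hij; auto.
    + intros e. rewrite H3, Hm. split.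
      * intros [i Hfi]. exists i. rewrite Hfi; auto.
      * intros [i Hfi]. exists i. rewrite <- Hfi; auto.
Qed.

Lemma reps_perm (x : nat -> R) (s t : nat -> nat) y e :
  (forall n, 0 < x n) ->
  (forall i j, s i = s j -> i = j) -> (forall i j, t i = t j -> i = j) ->
  (forall n, s (t n) = n) -> (forall n, t (s n) = n) ->
  (reps x y e <-> reps (fun k => x (s k)) y (fun k => e (s k))).
Proof.
  intros Hp Hs Ht Hst Hts. unfold reps, subsum_is. split.
  - intros H. apply (rearr (fun n => if e n then x n else 0) s t y); auto.
    intros n; destruct (e n); [left; auto| lra].
  - intros H. apply (rearr _ t s y) in H; auto.
    + eapply is_series_ext; [|exact H]. intros n; simpl. rewrite Hst. reflexivity.
    + intros n; destruct (e (s n)); [left; auto| lra].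
Qed.

Lemma csb (P : (nat -> bool) -> Prop) (T : (nat -> bool) -> (nat -> bool)) :
  (forall a b, T a = T b -> a = b) -> (forall a, P (T a)) -> has_card P CContinuum.
Proof.
  intros Hinj HS.
  set (C := fun a => exists n a0, ~ P a0 /\ Nat.iter n T a0 = a).
  set (g := fun a => if excluded_middle_informative (C a) then T a else a).
  exists g. split.
  - intros a b Hab. unfold g in Hab.
    destruct (excluded_middle_informative (C a)) as [Ca|Ca];
    destruct (excluded_middle_informative (C b)) as [Cb|Cb]; auto.
    + exfalso. apply Cb. destruct Ca as [n [a0 [H1 H2]]]. exists (S n), a0. split; auto.
      simpl. rewrite H2; auto.
    + exfalso. apply Ca. destruct Cb as [n [a0 [H1 H2]]]. exists (S n), a0. split; auto.
      simpl. rewrite H2; auto.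
  - intros e. split.
    + intros Pe. destruct (excluded_middle_informative (C e)) as [Ce|Ce].
      * destruct Ce as [n [a0 [H1 H2]]]. destruct n as [|n].
        { simpl in H2. subst. contradiction. }
        exists (Nat.iter n T a0). unfold g.
        destruct (excluded_middle_informative (C (Nat.iter n T a0))) as [|Hn].
        { rewrite <- H2. reflexivity. }
        exfalso. apply Hn. exists n, a0. auto.
      * exists e. unfold g. destruct (excluded_middle_informative (C e)); [contradiction|auto].
    + intros [a <-]. unfold g. destruct (excluded_middle_informative (C a)) as [|Ca]; auto.
      apply NNPP. intros Hn. apply Ca. exists 0%nat, a. auto.
Qed.

Lemma Series_ge_term (a : nat -> R) j : (forall n, 0 <= a n) -> ex_series a -> a j <= Series a.
Proof.
  intros Hp He. pose proof (ps_le_Series a (S j) Hp He). simpl in H.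
  pose proof (ps_nonneg a j Hp). lra.
Qed.

Lemma ps_zero (a : nat -> R) p : (forall n, (n < p)%nat -> a n = 0) -> ps a p = 0.
Proof. induction p; intros H; simpl; auto. rewrite IHp, H; [lra|lia|]. intros; apply H; lia. Qed.

Lemma eq_of_small (a b : R) (r : nat -> R) : (forall eps, 0 < eps -> exists N, r N < eps) ->
  (forall k, Rabs (a - b) <= r k) -> a = b.
Proof.
  intros Hr Hk. destruct (Req_dec a b) as [|Hne]; auto. exfalso.
  assert (0 < Rabs (a - b)) by (apply Rabs_pos_lt; lra).
  destruct (Hr _ H) as [N HN]. specialize (Hk N). lra.
Qed.

Section Core.
Variable x : nat -> R.
Hypothesis xpos : forall n, 0 < x n.
Hypothesis xsum : ex_series x.
Hypothesis xdec : forall n, x (S n) <= x n.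

Definition V (e : nat -> bool) : R := Series (te x e).
Definition r (n : nat) : R := Series (fun k => x (n + k)%nat).

Lemma te_bounds e n : 0 <= te x e n <= x n.
Proof. unfold te. destruct (e n); specialize (xpos n); lra. Qed.

Lemma te_nonneg e n : 0 <= te x e n.
Proof. apply te_bounds. Qed.

Lemma ex_te e : ex_series (te x e).
Proof. apply (ex_series_cmp _ x); auto. apply te_bounds. Qed.

Lemma reps_iff y e : reps x y e <-> V e = y.
Proof.
  unfold reps, subsum_is, V. split.
  - intros H. apply is_series_unique. exact H.
  - intros <-. apply Series_correct, ex_te.
Qed.

Lemma ach_iff y : achievement_set x y <-> exists e, V e = y.
Proof.
  unfold achievement_set. split; intros [e He]; exists e; apply reps_iff; auto.
Qed.

Lemma xle i j : (i <= j)%nat -> x j <= x i.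
Proof. intros H; induction H; [lra| specialize (xdec m); lra]. Qed.

Lemma xnonneg n : 0 <= x n.
Proof. left; auto. Qed.

Lemma r_split n : r n = x n + r (S n).
Proof.
  unfold r. rewrite (Series_incr_1 (fun k => x (n + k)%nat)).
  - rewrite Nat.add_0_r. f_equal. apply Series_ext. intros k. f_equal. lia.
  - apply ex_series_shift; auto.
Qed.

Lemma r_nonneg n : 0 <= r n.
Proof. apply Series_nonneg; [intros; apply xnonneg| apply ex_series_shift; auto]. Qed.

Lemma r_decr n : r (S n) <= r n.
Proof. rewrite (r_split n). specialize (xpos n). lra. Qed.

Lemma r_anti n m : (n <= m)%nat -> r m <= r n.
Proof. intros H; induction H; [lra| pose proof (r_decr m); lra]. Qed.

Lemma Series_x_split n : Series x = ps x n + r n.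
Proof. unfold r. apply Series_split; auto. Qed.

Lemma r_small eps : 0 < eps -> exists N, r N < eps.
Proof.
  intros He. pose proof (Series_correct _ xsum) as Hc.
  apply is_series_Reals in Hc. destruct (Hc eps He) as [N HN].
  exists (S N). specialize (HN N (Nat.le_refl N)). rewrite <- ps_sum_f in HN.
  unfold R_dist in HN. rewrite (Series_x_split (S N)) in HN.
  replace (ps x (S N) - (ps x (S N) + r (S N))) with (- r (S N)) in HN by ring.
  rewrite Rabs_Ropp, Rabs_right in HN; auto. apply Rle_ge, r_nonneg.
Qed.

Lemma r_small_all eps : 0 < eps -> exists N, forall n, (N <= n)%nat -> r n < eps.
Proof.
  intros He. destruct (r_small eps He) as [N HN]. exists N. intros n Hn.
  pose proof (r_anti N n Hn). lra.
Qed.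

Definition tl (e : nat -> bool) (p : nat) : R := Series (fun k => te x e (p + k)%nat).

Lemma V_split e p : V e = ps (te x e) p + tl e p.
Proof. unfold V, tl. apply Series_split. apply ex_te. Qed.

Lemma tl_bounds e p : 0 <= tl e p <= r p.
Proof.
  unfold tl, r. split.
  - apply Series_nonneg; [intros; apply te_nonneg| apply ex_series_shift, ex_te].
  - apply Series_le; [intros; apply te_bounds| apply ex_series_shift; auto].
Qed.

Lemma V_ge e i : e i = true -> x i <= V e.
Proof.
  intros H. unfold V. pose proof (Series_ge_term (te x e) i (te_nonneg e) (ex_te e)) as H0.
  assert (Hj : te x e i = x i) by (unfold te; rewrite H; auto). rewrite Hj in H0. exact H0.
Qed.

Lemma V_nonneg e : 0 <= V e.
Proof. apply Series_nonneg; [apply te_nonneg| apply ex_te]. Qed.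

Lemma V_strict e f j : (forall n, e n = true -> f n = true) -> e j = false -> f j = true ->
  V e + x j <= V f.
Proof.
  intros Hsub Hej Hfj. unfold V.
  assert (Hd : Series (fun n => te x f n - te x e n) = Series (te x f) - Series (te x e)).
  { apply Series_minus; apply ex_te. }
  assert (Hnn : forall n, 0 <= te x f n - te x e n).
  { intros n. unfold te. destruct (e n) eqn:E1.
    - rewrite (Hsub n E1). lra.
    - destruct (f n); specialize (xpos n); lra. }
  assert (Hex : ex_series (fun n => te x f n - te x e n)).
  { apply (ex_series_cmp _ x); auto. intros n; split; auto. unfold te.
    destruct (e n) eqn:E1; [rewrite (Hsub n E1); specialize (xpos n); lra|].
    destruct (f n); specialize (xpos n); lra. }
  pose proof (Series_ge_term _ j Hnn Hex) as H. cbv beta in H.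
  assert (Hj : te x f j - te x e j = x j) by (unfold te; rewrite Hfj, Hej; ring).
  rewrite Hj, Hd in H. lra.
Qed.

Variable b : R.
Hypothesis bpos : 0 < b.
Hypothesis bach : forall u, 0 <= u <= b -> achievement_set x u.

Lemma n0_exists : exists n0, forall n, (n0 <= n)%nat -> x n <= b.
Proof.
  destruct (lim0_small x (ex_series_lim_0 x xsum) b bpos) as [K HK]. exists K.
  intros n Hn. specialize (HK n Hn). rewrite Rabs_right in HK; [lra| apply Rle_ge, xnonneg].
Qed.

Lemma interval_fill n : x n <= b -> x n <= r (S n).
Proof.
  intros Hxb.
  assert (Hall : forall u, 0 <= u < x n -> u <= r (S n)).
  { intros u Hu. destruct (bach u ltac:(lra)) as [e He]. apply reps_iff in He.
    assert (Hz : forall i, (i < S n)%nat -> e i = false).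
    { intros i Hi. destruct (e i) eqn:E; auto. exfalso. pose proof (V_ge e i E).
      pose proof (xle i n ltac:(lia)). lra. }
    rewrite <- He, (V_split e (S n)).
    rewrite (ps_zero (te x e) (S n)).
    - pose proof (tl_bounds e (S n)). lra.
    - intros i Hi. unfold te. rewrite Hz; auto. }
  destruct (Rle_dec (x n) (r (S n))) as [|Hn]; auto.
  pose proof (r_nonneg (S n)).
  specialize (Hall ((x n + r (S n)) / 2) ltac:(lra)). lra.
Qed.



Fixpoint rem (m : nat) (t : R) (k : nat) : R :=
  match k with
  | O => t
  | S k => if Rle_dec (x (m + k)) (rem m t k) then rem m t k - x (m + k) else rem m t k
  end.

Definition gr (m : nat) (t : R) (i : nat) : bool :=
  if lt_dec i m then false else if Rle_dec (x i) (rem m t (i - m)) then true else false.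

Lemma greedy m t : (forall n, (m <= n)%nat -> x n <= r (S n)) -> 0 <= t <= r m ->
  (forall i, (i < m)%nat -> gr m t i = false) /\ V (gr m t) = t.
Proof.
  intros Hfill Ht.
  assert (Hinv : forall k, 0 <= rem m t k <= r (m + k)).
  { induction k; simpl.
    - rewrite Nat.add_0_r. auto.
    - destruct (Rle_dec (x (m + k)) (rem m t k)).
      + rewrite (r_split (m + k)) in IHk. replace (m + S k)%nat with (S (m + k)) by lia. lra.
      + replace (m + S k)%nat with (S (m + k)) by lia. specialize (Hfill (m + k)%nat ltac:(lia)). lra. }
  assert (Hz : forall i, (i < m)%nat -> gr m t i = false).
  { intros i Hi. unfold gr. destruct (lt_dec i m); [auto| lia]. }
  split; auto.
  assert (Hps : forall k, ps (te x (gr m t)) (m + k) = t - rem m t k).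
  { induction k.
    - rewrite Nat.add_0_r. simpl. rewrite ps_zero; [ring|].
      intros i Hi. unfold te. rewrite Hz; auto.
    - replace (m + S k)%nat with (S (m + k)) by lia. simpl ps. rewrite IHk. simpl rem.
      unfold te, gr. destruct (lt_dec (m + k) m); [lia|].
      replace (m + k - m)%nat with k by lia.
      destruct (Rle_dec (x (m + k)) (rem m t k)); ring. }
  apply (eq_of_small _ _ (fun k => 2 * r (m + k)%nat)).
  - intros eps He. destruct (r_small_all (eps/2) ltac:(lra)) as [N HN]. exists N.
    specialize (HN (m + N)%nat ltac:(lia)). lra.
  - intros k. rewrite (V_split _ (m + k)), Hps. pose proof (tl_bounds (gr m t) (m+k)).
    specialize (Hinv k). unfold Rabs; destruct (Rcase_abs _); lra.
Qed.

Lemma two_reps n : (1 <= n)%nat -> x n < x (n - 1) -> x n = r (S n) ->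
  has_card (reps x (x n)) (CFin 2) /\ achievement_set x (x n).
Proof.
  intros Hn1 Hlt Heq.
  set (d := fun i => Nat.eqb i n). set (u := fun i => Nat.ltb n i).
  assert (Vd : V d = x n).
  { rewrite (V_split d (S n)). simpl ps. rewrite ps_zero.
    - unfold tl. rewrite (Series_ext _ (fun _ => 0)), Series_zero.
      + unfold te, d. rewrite Nat.eqb_refl. ring.
      + intros k. unfold te, d. destruct (Nat.eqb_spec (S n + k) n); [lia|auto].
    - intros i Hi. unfold te, d. destruct (Nat.eqb_spec i n); [lia|auto]. }
  assert (Vu : V u = r (S n)).
  { rewrite (V_split u (S n)). rewrite ps_zero.
    - unfold tl, r. rewrite Rplus_0_l. apply Series_ext. intros k. unfold te, u.
      destruct (Nat.ltb_spec n (S n + k)); [auto| lia].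
    - intros i Hi. unfold te, u. destruct (Nat.ltb_spec n i); [lia|auto]. }
  assert (Hchar : forall e, reps x (x n) e <-> d = e \/ u = e).
  { intros e. rewrite reps_iff. split.
    - intros He.
      assert (Hlow : forall i, (i < n)%nat -> e i = false).
      { intros i Hi. destruct (e i) eqn:E; auto. exfalso. pose proof (V_ge e i E).
        pose proof (xle i (n-1) ltac:(lia)). lra. }
      destruct (e n) eqn:En.
      + left. apply functional_extensionality. intros i. unfold d.
        destruct (Nat.eqb_spec i n); [subst; auto|].
        destruct (Nat.lt_ge_cases i n); [rewrite Hlow; auto|].
        destruct (e i) eqn:Ei; auto. exfalso.
        assert (Hs : forall k, d k = true -> e k = true).
        { intros k Hk. unfold d in Hk. apply Nat.eqb_eq in Hk. subst; auto. }
        assert (Hdi : d i = false) by (unfold d; apply Nat.eqb_neq; auto).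
        pose proof (V_strict d e i Hs Hdi Ei). specialize (xpos i). lra.
      + right. apply functional_extensionality. intros i. unfold u.
        destruct (Nat.ltb_spec n i).
        * destruct (e i) eqn:Ei; auto. exfalso.
          assert (Hs : forall k, e k = true -> u k = true).
          { intros k Hk. unfold u. apply Nat.ltb_lt.
            destruct (Nat.lt_total n k) as [|[|]]; auto; subst; try congruence.
            rewrite Hlow in Hk; auto; congruence. }
          assert (Hui : u i = true) by (unfold u; apply Nat.ltb_lt; auto).
          pose proof (V_strict e u i Hs Ei Hui). specialize (xpos i). lra.
        * destruct (Nat.eq_dec i n); [subst; auto|]. rewrite Hlow; auto; lia.
    - intros [<-|<-]; [auto| rewrite Vu; auto]. }
  split.
  - exists (d :: u :: nil). split; [|split].
    + constructor; [|constructor; [simpl; tauto| constructor]].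
      simpl. intros [H|[]]. assert (d n = u n) by (rewrite H; auto).
      unfold d, u in H0. rewrite Nat.eqb_refl, Nat.ltb_irrefl in H0. discriminate.
    + reflexivity.
    + intros e. rewrite Hchar. simpl. tauto.
  - exists d. apply Hchar. auto.
Qed.

Variable n0 : nat.
Hypothesis Hfill : forall n, (n0 <= n)%nat -> x n <= r (S n).
Hypothesis Hstrict : forall K, exists q, (K <= q)%nat /\ x q < r (S q).

Definition cval (c : (nat -> bool) * nat) : R := ps (te x (fst c)) (snd c).
Definition valid (lo hi : R) (c : (nat -> bool) * nat) : Prop :=
  forall v, lo <= v <= hi -> 0 <= v - cval c <= r (snd c).
Definition Br (c c0 c1 : (nat -> bool) * nat) : Prop :=
  exists q, (snd c <= q)%nat /\ snd c0 = S q /\ snd c1 = S q /\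
    (forall i, (i < snd c)%nat -> fst c0 i = fst c i /\ fst c1 i = fst c i) /\
    fst c0 q = false /\ fst c1 q = true.

Lemma valid_mono lo hi lo2 hi2 c : lo <= lo2 -> hi2 <= hi -> valid lo hi c -> valid lo2 hi2 c.
Proof. intros H1 H2 H v Hv. apply H. lra. Qed.

Definition upd (e : nat -> bool) (q : nat) (bv : bool) : nat -> bool :=
  fun i => if Nat.eqb i q then bv else e i.

Lemma ps_mix e f p k : (forall i, (i < p)%nat -> f i = false) ->
  ps (te x (fun i => if lt_dec i p then e i else f i)) (p + k) =
  ps (te x e) p + ps (te x f) (p + k).
Proof.
  intros Hf. induction k.
  - rewrite Nat.add_0_r. rewrite (ps_zero (te x f) p).
    + rewrite Rplus_0_r. apply ps_ext. intros i Hi. unfold te. destruct (lt_dec i p); [auto|lia].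
    + intros i Hi. unfold te. rewrite Hf; auto.
  - replace (p + S k)%nat with (S (p + k)) by lia. simpl. rewrite IHk.
    assert (Ht : te x (fun i => if lt_dec i p then e i else f i) (p + k) = te x f (p + k)).
    { unfold te. destruct (lt_dec (p + k) p); [lia|]. reflexivity. }
    rewrite Ht. ring.
Qed.

Lemma branch_one c lo hi : (n0 <= snd c)%nat -> lo < hi -> valid lo hi c ->
  exists lo' hi' c0 c1, lo <= lo' /\ lo' < hi' /\ hi' <= hi /\ Br c c0 c1 /\
    (n0 <= snd c0)%nat /\ (n0 <= snd c1)%nat /\ valid lo' hi' c0 /\ valid lo' hi' c1.
Proof.
  destruct c as [e p]. simpl. intros Hp Hab Hv.
  set (t := (lo + hi) / 2 - cval (e, p)).
  assert (Ht : 0 <= t <= r p) by (apply (Hv ((lo+hi)/2)); lra).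
  destruct (greedy p t (fun n Hn => Hfill n ltac:(lia)) Ht) as [Hf HVf].
  set (f := gr p t) in *.
  destruct (r_small_all ((hi - lo)/2) ltac:(lra)) as [N HN].
  destruct (Hstrict (Nat.max N p)) as [q [Hq Hxq]].
  specialize (HN q ltac:(lia)).
  set (e' := fun i => if lt_dec i p then e i else f i).
  assert (HS : ps (te x e') q = (lo + hi) / 2 - tl f q).
  { replace q with (p + (q - p))%nat by lia. unfold e'. rewrite ps_mix; auto.
    replace (p + (q - p))%nat with q by lia.
    pose proof (V_split f q). unfold cval in t. simpl in t. unfold t in HVf. lra. }
  pose proof (tl_bounds f q) as Htl. pose proof (r_decr q) as Hrd.
  set (S0 := ps (te x e') q) in *.
  exists (S0 + x q), (S0 + r (S q)), (upd e' q false, S q), (upd e' q true, S q).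
  assert (Hc0 : cval (upd e' q false, S q) = S0).
  { unfold cval; simpl. rewrite (ps_ext _ (te x e') q).
    - unfold te at 2, upd. rewrite Nat.eqb_refl. unfold S0. ring.
    - intros i Hi. unfold te, upd. destruct (Nat.eqb_spec i q); [lia| auto]. }
  assert (Hc1 : cval (upd e' q true, S q) = S0 + x q).
  { unfold cval; simpl. rewrite (ps_ext _ (te x e') q).
    - unfold te at 2, upd. rewrite Nat.eqb_refl. unfold S0. ring.
    - intros i Hi. unfold te, upd. destruct (Nat.eqb_spec i q); [lia| auto]. }
  pose proof (xpos q) as Hxq0. pose proof (r_split q) as Hrs.
  split; [lra|]. split; [lra|]. split; [lra|]. split.
  - exists q. simpl. repeat split; try lia.
    + unfold upd, e'. destruct (Nat.eqb_spec i q); [lia|]. destruct (lt_dec i p); [auto|lia].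
    + unfold upd, e'. destruct (Nat.eqb_spec i q); [lia|]. destruct (lt_dec i p); [auto|lia].
    + unfold upd. rewrite Nat.eqb_refl. auto.
    + unfold upd. rewrite Nat.eqb_refl. auto.
  - simpl. split; [lia|]. split; [lia|]. split.
    + intros v Hv2. rewrite Hc0. simpl. split; lra.
    + intros v Hv2. rewrite Hc1. simpl. split; lra.
Qed.

Definition dc : (nat -> bool) * nat := (fun _ => false, 0%nat).

Lemma refine (L : list ((nat -> bool) * nat)) : forall lo hi, lo < hi ->
  (forall c, In c L -> (n0 <= snd c)%nat /\ valid lo hi c) ->
  exists lo' hi' L', lo <= lo' /\ lo' < hi' /\ hi' <= hi /\ length L' = (2 * length L)%nat /\
    (forall i, (i < length L)%nat -> Br (nth i L dc) (nth (2 * i) L' dc) (nth (2 * i + 1) L' dc)) /\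
    (forall c, In c L' -> (n0 <= snd c)%nat /\ valid lo' hi' c).
Proof.
  induction L as [|c L IH]; intros lo hi Hlh HL.
  - exists lo, hi, nil. repeat split; try lra; simpl; try lia; tauto.
  - destruct (HL c (or_introl eq_refl)) as [Hc1 Hc2].
    destruct (branch_one c lo hi Hc1 Hlh Hc2) as [lo1 [hi1 [c0 [c1 [H1 [H2 [H3 [Hbr [Hn0 [Hn1 [Hv0 Hv1]]]]]]]]]]].
    destruct (IH lo1 hi1 H2) as [lo2 [hi2 [L' [G1 [G2 [G3 [G4 [G5 G6]]]]]]]].
    { intros c' Hc'. destruct (HL c' (or_intror Hc')) as [A B]. split; auto.
      apply (valid_mono lo hi); auto; lra. }
    exists lo2, hi2, (c0 :: c1 :: L'). split; [lra|]. split; [lra|]. split; [lra|].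
    split; [simpl; rewrite G4; lia|]. split.
    + intros i Hi. destruct i as [|i].
      * simpl. exact Hbr.
      * replace (2 * S i)%nat with (S (S (2 * i))) by lia.
        replace (S (S (2 * i)) + 1)%nat with (S (S (2 * i + 1))) by lia.
        simpl. apply G5. simpl in Hi. lia.
    + intros c' [<-|[<-|Hc']].
      * split; auto. apply (valid_mono lo1 hi1); auto; lra.
      * split; auto. apply (valid_mono lo1 hi1); auto; lra.
      * apply G6; auto.
Qed.

Definition State := (R * R * list ((nat -> bool) * nat))%type.
Definition good (s : State) : Prop :=
  fst (fst s) < snd (fst s) /\ forall c, In c (snd s) -> (n0 <= snd c)%nat /\ valid (fst (fst s)) (snd (fst s)) c.
Definition rel (s s' : State) : Prop :=
  fst (fst s) <= fst (fst s') /\ snd (fst s') <= snd (fst s) /\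
  length (snd s') = (2 * length (snd s))%nat /\
  forall i, (i < length (snd s))%nat -> Br (nth i (snd s) dc) (nth (2 * i) (snd s') dc) (nth (2 * i + 1) (snd s') dc).

Lemma step_ex (s : State) : exists s', good s -> good s' /\ rel s s'.
Proof.
  destruct (classic (good s)) as [Hg|Hg]; [|exists s; tauto].
  destruct s as [[lo hi] L]. destruct Hg as [H1 H2]. simpl in *.
  destruct (refine L lo hi H1 H2) as [lo' [hi' [L' [G1 [G2 [G3 [G4 [G5 G6]]]]]]]].
  exists (lo', hi', L'). intros _. split; [split; simpl; auto|]. unfold rel; simpl. auto.
Qed.

Definition step (s : State) : State := proj1_sig (constructive_indefinite_description _ (step_ex s)).
Lemma step_spec s : good s -> good (step s) /\ rel s (step s).
Proof. unfold step. destruct (constructive_indefinite_description _ _); simpl; auto. Qed.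

Definition st0 : State := (0, r n0, ((fun _ => false), n0) :: nil).
Fixpoint st (d : nat) : State := match d with O => st0 | S d => step (st d) end.

Lemma st_good d : good (st d).
Proof.
  induction d.
  - simpl. unfold good, st0; simpl. split.
    + pose proof (r_split n0). pose proof (r_nonneg (S n0)). pose proof (xpos n0). lra.
    + intros c [<-|[]]. simpl. split; [lia|]. intros v Hv. unfold cval; simpl.
      rewrite ps_zero; [lra|]. intros; unfold te; auto.
  - simpl. apply step_spec; auto.
Qed.

Lemma st_rel d : rel (st d) (st (S d)).
Proof. simpl. apply step_spec, st_good. Qed.

Lemma st_len d : length (snd (st d)) = (2 ^ d)%nat.
Proof.
  induction d; [reflexivity|]. destruct (st_rel d) as [_ [_ [H _]]]. rewrite H, IHd. simpl. lia.
Qed.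

Definition lo_ d := fst (fst (st d)).
Definition hi_ d := snd (fst (st d)).

Lemma lo_lt_hi d : lo_ d < hi_ d.
Proof. destruct (st_good d); auto. Qed.
Lemma lo_incr d : lo_ d <= lo_ (S d).
Proof. destruct (st_rel d); auto. Qed.
Lemma hi_decr d : hi_ (S d) <= hi_ d.
Proof. destruct (st_rel d) as [_ [H _]]; auto. Qed.
Lemma lo_mono d d' : (d <= d')%nat -> lo_ d <= lo_ d'.
Proof. intros H; induction H; [lra| pose proof (lo_incr m); lra]. Qed.
Lemma hi_mono d d' : (d <= d')%nat -> hi_ d' <= hi_ d.
Proof. intros H; induction H; [lra| pose proof (hi_decr m); lra]. Qed.
Lemma lo_le_hi k d : lo_ k <= hi_ d.
Proof.
  destruct (Nat.le_ge_cases k d) as [H|H].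
  - pose proof (lo_mono k d H). pose proof (lo_lt_hi d). lra.
  - pose proof (hi_mono d k H). pose proof (lo_lt_hi k). lra.
Qed.

Lemma lo_ub : has_ub lo_.
Proof. exists (hi_ 0). intros y [n ->]. apply lo_le_hi. Qed.

Definition upt : R := proj1_sig (growing_cv lo_ lo_incr lo_ub).

Lemma upt_in d : lo_ d <= upt <= hi_ d.
Proof.
  unfold upt. destruct (growing_cv _ _ _) as [l Hl]. simpl. split.
  - apply (growing_ineq lo_); auto. exact lo_incr.
  - destruct (Rle_dec l (hi_ d)) as [|Hn]; auto. exfalso.
    destruct (Hl (l - hi_ d)) as [N HN]; [lra|].
    specialize (HN N (Nat.le_refl N)). pose proof (lo_le_hi N d).
    unfold R_dist in HN. rewrite Rabs_left1 in HN; lra.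
Qed.

Fixpoint idx (w : nat -> bool) (d : nat) : nat :=
  match d with O => O | S d => (2 * idx w d + (if w d then 1 else 0))%nat end.

Lemma idx_lt w d : (idx w d < 2 ^ d)%nat.
Proof. induction d; simpl; [lia|]. destruct (w d); lia. Qed.

Definition node (w : nat -> bool) (d : nat) := nth (idx w d) (snd (st d)) dc.

Lemma node_in w d : In (node w d) (snd (st d)).
Proof. unfold node. apply nth_In. rewrite st_len. apply idx_lt. Qed.

Lemma node_valid w d : (n0 <= snd (node w d))%nat /\ valid (lo_ d) (hi_ d) (node w d).
Proof. destruct (st_good d) as [_ H]. apply H, node_in. Qed.

Lemma node_br w d : Br (node w d) (nth (2 * idx w d) (snd (st (S d))) dc)
                         (nth (2 * idx w d + 1) (snd (st (S d))) dc) /\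
  node w (S d) = if w d then nth (2 * idx w d + 1) (snd (st (S d))) dc
                  else nth (2 * idx w d) (snd (st (S d))) dc.
Proof.
  split.
  - destruct (st_rel d) as [_ [_ [_ H]]]. apply H. rewrite st_len. apply idx_lt.
  - unfold node at 1. simpl idx. destruct (w d); [reflexivity| rewrite Nat.add_0_r; reflexivity].
Qed.

Lemma node_step w d : (snd (node w d) < snd (node w (S d)))%nat /\
  forall i, (i < snd (node w d))%nat -> fst (node w (S d)) i = fst (node w d) i.
Proof.
  destruct (node_br w d) as [[q [H1 [H2 [H3 [H4 _]]]]] H5]. rewrite H5.
  destruct (w d); split; try lia; intros i Hi; apply H4; auto.
Qed.

Lemma node_lvl w d : (d <= snd (node w d))%nat.
Proof. induction d; [lia|]. destruct (node_step w d). lia. Qed.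

Lemma node_agree w d d' : (d <= d')%nat -> forall i, (i < snd (node w d))%nat ->
  fst (node w d') i = fst (node w d) i.
Proof.
  intros H. induction H; intros i Hi; auto.
  destruct (node_step w m) as [Hl Ha].
  assert (Hlm : (snd (node w d) <= snd (node w m))%nat).
  { clear -H. induction H; auto. destruct (node_step w m); lia. }
  rewrite Ha; [apply IHle; auto| lia].
Qed.

Definition Epath (w : nat -> bool) (i : nat) : bool := fst (node w (S i)) i.

Lemma Epath_agree w d i : (i < snd (node w d))%nat -> Epath w i = fst (node w d) i.
Proof.
  intros Hi. unfold Epath.
  assert (H1 : (i < snd (node w (S i)))%nat) by (pose proof (node_lvl w (S i)); lia).
  rewrite <- (node_agree w (S i) (Nat.max d (S i)) ltac:(lia) i H1).
  apply node_agree; auto; lia.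
Qed.

Lemma Epath_V w : V (Epath w) = upt.
Proof.
  apply (eq_of_small _ _ r); [exact r_small|]. intros d.
  destruct (node_valid w d) as [_ Hv]. specialize (Hv upt (upt_in d)).
  rewrite (V_split _ (snd (node w d))).
  assert (Hps : ps (te x (Epath w)) (snd (node w d)) = cval (node w d)).
  { unfold cval. apply ps_ext. intros i Hi. unfold te. rewrite (Epath_agree w d i Hi); auto. }
  rewrite Hps. pose proof (tl_bounds (Epath w) (snd (node w d))).
  pose proof (r_anti d (snd (node w d)) (node_lvl w d)).
  unfold Rabs; destruct (Rcase_abs _); lra.
Qed.

Lemma idx_prefix w w' d : (forall k, (k < d)%nat -> w k = w' k) -> idx w d = idx w' d.
Proof.
  induction d; intros H; simpl; auto. rewrite IHd, H; auto.
Qed.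

Lemma least_diff (w w' : nat -> bool) : w <> w' ->
  exists d, w d <> w' d /\ forall k, (k < d)%nat -> w k = w' k.
Proof.
  intros Hne. assert (Hex : exists d, w d <> w' d).
  { apply NNPP. intros Hn. apply Hne. apply functional_extensionality. intros k.
    apply NNPP. intros Hk. apply Hn. eauto. }
  destruct Hex as [d0 Hd0]. revert Hd0. induction d0 as [d0 IH] using (well_founded_induction lt_wf).
  intros Hd0. destruct (classic (exists k, (k < d0)%nat /\ w k <> w' k)) as [[k [Hk1 Hk2]]|Hno].
  - apply (IH k Hk1 Hk2).
  - exists d0. split; auto. intros k Hk. apply NNPP. intros Hn. apply Hno. eauto.
Qed.

Lemma Epath_inj w w' : Epath w = Epath w' -> w = w'.
Proof.
  intros HE. apply NNPP. intros Hne. destruct (least_diff w w' Hne) as [d [Hd Hlt]].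
  assert (Hidx : idx w d = idx w' d) by (apply idx_prefix; auto).
  assert (Hnode : node w d = node w' d) by (unfold node; rewrite Hidx; auto).
  destruct (node_br w d) as [[q [H1 [H2 [H3 [H4 [H5 H6]]]]]] Hw].
  destruct (node_br w' d) as [_ Hw'].
  rewrite <- Hidx in Hw'.
  assert (Ew : Epath w q = fst (node w (S d)) q).
  { apply Epath_agree. rewrite Hw. destruct (w d); lia. }
  assert (Ew' : Epath w' q = fst (node w' (S d)) q).
  { apply Epath_agree. rewrite Hw'. destruct (w' d); lia. }
  rewrite HE in Ew. rewrite Ew in Ew'.
  rewrite Hw, Hw' in Ew'. destruct (w d), (w' d); congruence.
Qed.

Lemma continuum_reps : has_card (reps x upt) CContinuum /\ achievement_set x upt.
Proof.
  split.
  - apply (csb _ Epath); [exact Epath_inj|]. intros w. apply reps_iff. apply Epath_V.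
  - exists (Epath (fun _ => false)). apply reps_iff. apply Epath_V.
Qed.

End Core.

Lemma main_sorted (x : nat -> R) (b : R) : (forall n, 0 < x n) -> ex_series x ->
  (forall n, x (S n) <= x n) -> 0 < b -> (forall u, 0 <= u <= b -> achievement_set x u) ->
  (exists y, has_card (reps x y) (CFin 2) /\ achievement_set x y) \/
  (exists y, has_card (reps x y) CContinuum /\ achievement_set x y).
Proof.
  intros xpos xsum xdec bpos bach.
  destruct (n0_exists x xpos xsum b bpos) as [n0 Hn0].
  assert (Hfill : forall n, (n0 <= n)%nat -> x n <= r x (S n)).
  { intros n Hn. apply (interval_fill x xpos xsum xdec b bach). apply Hn0; auto. }
  destruct (classic (exists n, (1 <= n)%nat /\ x n < x (n - 1)%nat /\ x n = r x (S n))) as [[n [H1 [H2 H3]]]|Hno].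
  - left. exists (x n). apply two_reps; auto.
  - right.
    assert (Hstrict : forall K, exists q, (K <= q)%nat /\ x q < r x (S q)).
    { intros K. set (n := S (Nat.max K n0)).
      destruct (Rle_lt_or_eq_dec _ _ (Hfill n ltac:(unfold n; lia))) as [Hl|He].
      - exists n. split; auto. unfold n; lia.
      - exists (n - 1)%nat. split; [unfold n; lia|].
        assert (Hle : x (n - 1)%nat <= x n).
        { destruct (Rle_dec (x (n - 1)%nat) (x n)) as [|Hg]; auto. exfalso. apply Hno.
          exists n. split; [unfold n; lia|]. split; auto. lra. }
        replace (S (n - 1)) with n by (unfold n; lia).
        rewrite (r_split x xsum n). pose proof (xpos n). lra. }
    exists (upt x xpos xsum n0 Hfill Hstrict).
    apply continuum_reps.
Qed.

Lemma is_series_zero : is_series (fun _ : nat => 0) 0.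
Proof.
  apply is_series_Reals. intros eps He. exists 0%nat. intros n _.
  rewrite <- ps_sum_f, ps_zero; auto. unfold R_dist. rewrite Rminus_0_r, Rabs_R0. lra.
Qed.

Lemma ach_nonneg (x : nat -> R) y : (forall n, 0 < x n) -> achievement_set x y -> 0 <= y.
Proof.
  intros xpos [e He]. unfold subsum_is in He. rewrite <- (is_series_unique _ _ He).
  apply Series_nonneg; [intros n; destruct (e n); [left; auto| lra]| exists y; auto].
Qed.

Theorem theorem6p1 (M : CardVal -> Prop) :
  in_I M -> M (CFin 2) \/ ~ bounded_cards M.
Proof.
  intros [x [[xpos xsum] [[l [Hl Hiff]] HM]]].
  assert (H0 : achievement_set x 0).
  { exists (fun _ => false). unfold subsum_is. apply is_series_zero. }
  destruct (proj1 (Hiff 0) H0) as [[a b] [Hin Hab]]. simpl in Hab.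
  pose proof (Hl _ Hin) as Hlt. simpl in Hlt.
  assert (bpos : 0 < b).
  { destruct (Rlt_le_dec 0 b) as [|Hb]; auto. exfalso.
    assert (achievement_set x a) by (apply Hiff; exists (a, b); simpl; split; auto; lra).
    pose proof (ach_nonneg x a xpos H). lra. }
  assert (bach : forall u, 0 <= u <= b -> achievement_set x u).
  { intros u Hu. apply Hiff. exists (a, b). simpl. split; auto; lra. }
  assert (xlim : is_lim_seq x 0) by (apply ex_series_lim_0; auto).
  set (s := sg x xpos xlim).
  assert (Hs : forall i j, s i = s j -> i = j) by (apply sg_inj).
  assert (Hsurj : forall n, exists k, s k = n) by (apply sg_surj).
  set (t := fun n => proj1_sig (constructive_indefinite_description _ (Hsurj n))).
  assert (Hst : forall n, s (t n) = n).
  { intros n. unfold t. destruct (constructive_indefinite_description _ _); auto. }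
  assert (Hts : forall n, t (s n) = n) by (intros n; apply Hs; rewrite Hst; auto).
  assert (Ht : forall i j, t i = t j -> i = j).
  { intros i j H. rewrite <- (Hst i), <- (Hst j), H. auto. }
  set (x' := fun k => x (s k)).
  assert (x'pos : forall n, 0 < x' n) by (intros; apply xpos).
  assert (x'sum : ex_series x').
  { apply (rearrange_le x s); auto. intros; left; auto. }
  assert (x'dec : forall n, x' (S n) <= x' n) by (intros; apply sg_decr).
  assert (Hrep : forall y e, reps x y e <-> reps x' y (fun k => e (s k))).
  { intros y e. apply (reps_perm x s t y e); auto. }
  assert (Hrep' : forall y f, reps x' y f -> reps x y (fun n => f (t n))).
  { intros y f H. apply Hrep. replace (fun k => f (t (s k))) with f; auto.
    apply functional_extensionality. intros k. rewrite Hts. auto. }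
  assert (bach' : forall u, 0 <= u <= b -> achievement_set x' u).
  { intros u Hu. destruct (bach u Hu) as [e He]. exists (fun k => e (s k)). apply Hrep; auto. }
  assert (Htrans : forall y k, has_card (reps x' y) k -> achievement_set x' y -> M k).
  { intros y k Hc [f Hf]. apply HM. exists y. split.
    - exists (fun n => f (t n)). apply Hrep'; auto.
    - apply (has_card_transfer (reps x y) (reps x' y) (fun e k => e (s k)) (fun f n => f (t n))); auto.
      + intros e. apply functional_extensionality. intros n. rewrite Hst. auto.
      + intros g. apply functional_extensionality. intros n. rewrite Hts. auto. }
  destruct (main_sorted x' b x'pos x'sum x'dec bpos bach') as [[y [Hc Ha]]|[y [Hc Ha]]].
  - left. apply (Htrans y); auto.
  - right. intros [N HN]. destruct (HN CContinuum (Htrans y _ Hc Ha)) as [n [Hn _]]. discriminate.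
Qed.
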